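(* Let $G$ be a context-free grammar, $k\ge0$, and $N$ its canonical LR($k$) NFA. Let $U_0,U_1,\dots,U_r$ be vertices of $N$ with $U_0$ the starting vertex and an edge $U_{i-1}\xrightarrow{\sigma_i}U_i$ for each $i$ (labels $\sigma_i\in\Sigma\cup\Lambda\cup\{\varepsilon\}$), and suppose $U_r$ has an action on a lookahead $\lambda\in\Gamma^k$. Let $\zeta=\zeta_1\cdots\zeta_m$ be the string of non-$\varepsilon$ labels among $\sigma_1,\dots,\sigma_r$. Suppose $x_1\cdots x_s\in\Sigma^*$ and $P_1,\dots,P_m$ are parse trees, $P_j$ having root $\zeta_j$ (a single leaf if $\zeta_j$ is terminal), whose yields concatenate to $x_1\cdots x_s$; let $\mathcal S_{\mathrm{part}}$ be the concatenation of the LR parses of $P_1,\dots,P_m$. Then there exist $x_{s+1}\cdots x_n\in\Sigma^*$ with $\mathrm{First}_k(x_{s+1}\cdots x_n\dashv^k)=\{\lambda\}$ and a parse tree of $x_1\cdots x_n$ with root $S$ whose LR parse $\mathcal S$ has $\mathcal S_{\mathrm{part}}$ as a prefix.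
   Context: $G$ has finite nonterminal set $\Lambda$, terminal set $\Sigma$, $\Gamma=\Sigma\cup\{\dashv\}$ with $\dashv$ an end marker, and start symbol $S$ which appears on the left of exactly one production $S\to\eta$ and on no right-hand side. For $T\subseteq(\Lambda\cup\Gamma)^*$, $\mathrm{Gen}(T)$ is the set of $y\in\Gamma^*$ with $x\Rightarrow^*y$ for some $x\in T$, and $\mathrm{First}_k(T)=\{x_1\cdots x_{\min(k,r)}: x_1\cdots x_r\in T\}$; concatenations involving sets are taken elementwise. A dotted production is $X\to\alpha\cdot\beta$ where $X\to\alpha\beta$ is a production. Forward-reachable $k$-follow strings: the least assignment of subsets of $\Gamma^k$ to productions such that $\dashv^k$ is assigned to $S\to\eta$, and whenever $\lambda$ is assigned to $X\to\alpha Y\beta$ then every $\mu\in\mathrm{First}_k(\mathrm{Gen}(\beta\lambda))$ is assigned to every production $Y\to\gamma$. For a dotted production $\hat\Pi$ with underlying production $\Pi$, $\mathcal U(\hat\Pi)$ is the set assigned to $\Pi$. Canonical LR($k$) NFA: vertices $(\hat\Pi,\lambda)$ with $\lambda\in\mathcal U(\hat\Pi)$; starting vertex $(S\to\cdot\,\eta,\dashv^k)$; $\varepsilon$-edges from $(X\to\alpha\cdot Y\beta,\lambda)$ to $(Y\to\cdot\,\gamma,\mu)$ whenever $\mu\in\mathrm{First}_k(\mathrm{Gen}(\beta\lambda))$; edges labeled $\tau\in\Lambda\cup\Sigma$ from $(X\to\alpha\cdot\tau\beta,\lambda)$ to $(X\to\alpha\tau\cdot\beta,\lambda)$. Actions: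 vertex $(X\to\alpha\,\cdot,\lambda)$ has action ``Reduce $X\to\alpha$'' on lookahead $\lambda$; vertex $(X\to\alpha\cdot\sigma\beta,\lambda)$ with $\sigma\in\Sigma$ has action ``Shift'' on each lookahead $\mu\in\mathrm{First}_k(\mathrm{Gen}(\sigma\beta\lambda))$; there are no other actions. LR parse of a parse tree $P$: the sequence of operations obtained by a postorder traversal of $P$, where a leaf labeled by a terminal $\sigma$ contributes $\mathrm{Shift}(\sigma)$ and an internal node expanded by production $\Pi$ contributes $\mathrm{Reduce}(\Pi)$ (after its children; a node for a production $X\to\varepsilon$ has no children). *)

(* Defs.v *)
From mathcomp Require Import all_boot.
From Stdlib Require Import Relations.

Set Implicit Arguments.
Unset Strict Implicit.
Unset Printing Implicit Defensive.

Section Grammar.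

(* Lam = nonterminals, Sig = terminals.  Gamma = Sig u {-|} is [option Sig],
   with [None] the end marker -|.  Grammar symbols on right-hand sides of
   productions range over Lam + Sig; sentential forms used by Gen range over
   Lam + Gamma = Lam + option Sig. *)
Variables (Lam Sig : finType).

Record grammar := Grammar {
  prods : seq (Lam * seq (Lam + Sig));
  start : Lam
}.

Variable G : grammar.

Definition start_condition : Prop :=
  count (fun p => p.1 == start G) (prods G) = 1 /\
  all (fun p => inl (start G) \notin p.2) (prods G).

Definition gsym := (Lam + option Sig)%type.

Definition lift (a : seq (Lam + Sig)) : seq gsym :=
  map (fun s => match s with inl X => inl X | inr t => inr (Some t) end) a.

Inductive dstep : seq gsym -> seq gsym -> Prop :=
| dstep_intro u v X a : (X, a) \in prods G ->
    dstep (u ++ inl X :: v) (u ++ lift a ++ v).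

Definition derives : seq gsym -> seq gsym -> Prop := clos_refl_trans _ dstep.

Definition Gen (w : seq gsym) (y : seq (option Sig)) : Prop :=
  derives w (map inr y).

Variable k : nat.

Definition FirstGen (w : seq gsym) (mu : seq (option Sig)) : Prop :=
  exists2 y, Gen w y & mu = take k y.

Inductive follow : Lam * seq (Lam + Sig) -> seq (option Sig) -> Prop :=
| follow_start eta : (start G, eta) \in prods G ->
    follow (start G, eta) (nseq k None)
| follow_step X alpha Y beta lam gamma mu :
    (X, alpha ++ inl Y :: beta) \in prods G ->
    follow (X, alpha ++ inl Y :: beta) lam ->
    (Y, gamma) \in prods G ->
    FirstGen (lift beta ++ map inr lam) mu ->
    follow (Y, gamma) mu.

(* Candidate vertices: dotted production X -> alpha . beta with lookahead *)
Record vertex := Vertex {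
  v_lhs : Lam;
  v_alpha : seq (Lam + Sig);
  v_beta : seq (Lam + Sig);
  v_la : seq (option Sig)
}.

Definition is_vertex (U : vertex) : Prop :=
  (v_lhs U, v_alpha U ++ v_beta U) \in prods G /\
  follow (v_lhs U, v_alpha U ++ v_beta U) (v_la U).

Definition start_vertex (eta : seq (Lam + Sig)) : vertex :=
  Vertex (start G) [::] eta (nseq k None).

(* edge labels: None = epsilon, Some tau with tau \in Lam u Sig *)
Definition raw_edge (U : vertex) (l : option (Lam + Sig)) (V : vertex) : Prop :=
  match l with
  | None =>
      exists Y beta,
        v_beta U = inl Y :: beta /\ v_lhs V = Y /\ v_alpha V = [::] /\
        (Y, v_beta V) \in prods G /\
        FirstGen (lift beta ++ map inr (v_la U)) (v_la V)
  | Some tau =>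
      exists beta,
        v_beta U = tau :: beta /\
        V = Vertex (v_lhs U) (rcons (v_alpha U) tau) beta (v_la U)
  end.

Definition edge U l V : Prop := is_vertex U /\ is_vertex V /\ raw_edge U l V.

(* a path U = U_0 -sigma_1-> U_1 -> ... -> U_r given as list of (sigma_i, U_i) *)
Fixpoint nfa_path (U : vertex) (steps : seq (option (Lam + Sig) * vertex)) : Prop :=
  match steps with
  | [::] => True
  | (l, V) :: t => edge U l V /\ nfa_path V t
  end.

(* U has an action (Reduce or Shift) on lookahead mu *)
Definition has_action (U : vertex) (mu : seq (option Sig)) : Prop :=
  (v_beta U = [::] /\ mu = v_la U) \/
  (exists sigma beta, v_beta U = inr sigma :: beta /\
     FirstGen (inr (Some sigma) :: lift beta ++ map inr (v_la U)) mu).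

Inductive ptree :=
| Leaf of Sig
| Node of Lam & seq (Lam + Sig) & seq ptree.

Definition proot (t : ptree) : Lam + Sig :=
  match t with Leaf a => inr a | Node X _ _ => inl X end.

Fixpoint valid (t : ptree) : bool :=
  match t with
  | Leaf _ => true
  | Node X rhs ch =>
      [&& (X, rhs) \in prods G, map proot ch == rhs & all valid ch]
  end.

Fixpoint yield (t : ptree) : seq Sig :=
  match t with
  | Leaf a => [:: a]
  | Node _ _ ch => flatten (map yield ch)
  end.

Inductive lr_op := Shift of Sig | Reduce of Lam & seq (Lam + Sig).

Fixpoint lrparse (t : ptree) : seq lr_op :=
  match t with
  | Leaf a => [:: Shift a]
  | Node X rhs ch => flatten (map lrparse ch) ++ [:: Reduce X rhs]
  end.

Definition is_prefix (A : Type) (s t : seq A) : Prop := exists u, t = s ++ u.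

End Grammar.

(* Main.v *)
Require Import Defs.
From mathcomp Require Import all_boot.
From Stdlib Require Import Relations.

Set Implicit Arguments.
Unset Strict Implicit.
Unset Printing Implicit Defensive.

Lemma take_take_cat0 (T : Type) (k : nat) (a b : seq T) n : n <= k ->
  take n (a ++ take k b) = take n (a ++ b).
Proof.
elim: a n => [|x a IH] n Hn; first by rewrite /= take_takel.
case: n Hn => [|n] Hn //=.
by rewrite IH // ltnW.
Qed.

Lemma take_take_cat (T : Type) (k : nat) (a b : seq T) :
  take k (a ++ take k b) = take k (a ++ b).
Proof. exact: take_take_cat0. Qed.

Section Proof.
Variables (Lam Sig : finType) (G : grammar Lam Sig) (k : nat).

Inductive F : seq (gsym Lam Sig) -> seq (option Sig) -> Prop :=
| F_nil : F [::] [::]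
| F_term t w y : F w y -> F (inr t :: w) (t :: y)
| F_nt (T : ptree Lam Sig) X w y : valid G T -> proot T = inl X -> F w y ->
    F (inl X :: w) (map Some (yield T) ++ y).
Definition F_nt'' := F_nt.


Lemma F_cat2 u v y1 y2 : F u y1 -> F v y2 -> F (u ++ v) (y1 ++ y2).
Proof.
elim=> [|t w y _ IH|T X w y vT rT _ IH] Fv //=.
- by apply: F_term; apply: IH.
- by rewrite -catA; apply: F_nt'' => //; apply: IH.
Qed.


Lemma F_cat u v y : F (u ++ v) y ->
  exists y1 y2, [/\ y = y1 ++ y2, F u y1 & F v y2].
Proof.
elim: u y => [|s u IH] y /=; first by move=> H; exists [::], y; split=> //; exact: F_nil.
move=> H; inversion H; subst.
- have [y1 [y2 [-> F1 F2]]] := IH _ H3.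
  by exists (t :: y1), y2; split => //; apply: F_term.
- have [y1 [y2 [-> F1 F2]]] := IH _ H5.
  by exists (map Some (yield T) ++ y1), y2; rewrite catA; split => //; apply: F_nt.
Qed.

Lemma F_lift a y : F (Defs.lift a) y -> exists Ts : seq (ptree Lam Sig),
  [/\ all (valid G) Ts, map (@proot _ _) Ts = a &
      y = map Some (flatten (map (@yield _ _) Ts))].
Proof.
elim: a y => [|s a IH] y /=.
  by move=> H; inversion H; exists [::].
case: s => [X|t] H; inversion H; subst.
- have [Ts [vTs rTs ->]] := IH _ H5.
  exists (T :: Ts); split => /=; [by rewrite H2 vTs | by rewrite H3 rTs | by rewrite map_cat].
- have [Ts [vTs rTs ->]] := IH _ H3.
  by exists (Leaf _ t :: Ts); split => /=; [ | rewrite rTs | ].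
Qed.

Lemma F_map_inr y : F (map inr y) y.
Proof. elim: y => [|t y IH] /=; [exact: F_nil | exact: F_term]. Qed.

Lemma F_map_inr_inv la y : F (map inr la) y -> y = la.
Proof.
elim: la y => [|t la IH] y /= H; inversion H; subst => //.
by rewrite (IH _ H3).
Qed.

Lemma F_step w w' y : dstep G w w' -> F w' y -> F w y.
Proof.
case=> u v X a Hp H.
have [y1 [y2 [-> F1 F2]]] := F_cat H.
have [y21 [y22 [-> F21 F22]]] := F_cat F2.
have [Ts [vTs rTs ->]] := F_lift F21.
apply: F_cat2 => //.
have -> : map Some (flatten (map (@yield _ _) Ts)) = map Some (yield (Node X a Ts)) by [].
apply: F_nt => //=.
by rewrite Hp rTs eqxx vTs.
Qed.

Lemma F_derives w z : derives G w z -> forall y, z = map inr y -> F w y.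
Proof.
move=> H; elim: (clos_rt_rt1n _ _ _ _ H) => [x|x y0 z0 Hs _ IH] y E.
- subst; exact: F_map_inr.
- by apply: (F_step Hs); apply: IH.
Qed.

Lemma FirstGen_trees beta la mu :
  FirstGen G k (Defs.lift beta ++ map inr la) mu ->
  exists Gs : seq (ptree Lam Sig),
  [/\ all (valid G) Gs, map (@proot _ _) Gs = beta &
      mu = take k (map Some (flatten (map (@yield _ _) Gs)) ++ la)].
Proof.
case=> y Hy ->.
have := F_derives Hy (erefl _).
case/F_cat=> y1 [y2 [-> F1 F2]].
have [Ts [vTs rTs ->]] := F_lift F1.
by exists Ts; rewrite (F_map_inr_inv F2).
Qed.

Lemma gen (lam : seq (option Sig)) (Hlam : size lam = k) :
  forall steps U, nfa_path G k U steps ->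
  has_action G k (last U (map snd steps)) lam ->
  forall Ps : seq (ptree Lam Sig),
  map (@proot _ _) Ps = pmap id (map fst steps) -> all (valid G) Ps ->
  exists Fs w, [/\ all (valid G) Fs, map (@proot _ _) Fs = v_beta U,
    flatten (map (@yield _ _) Fs) = flatten (map (@yield _ _) Ps) ++ w,
    lam = take k (map Some w ++ v_la U) &
    is_prefix (flatten (map (@lrparse _ _) Ps)) (flatten (map (@lrparse _ _) Fs))].
Proof.
elim=> [|[l V] t IH] U /=.
- move=> _ Hact [|//] _ _.
  case: Hact => [[Hb Hl]|[sig [beta [Hb HF]]]].
    exists [::], [::]; rewrite Hb /= -Hl take_oversize ?Hlam //; split => //.
    by exists [::].
  have [Gs [vGs rGs ->]] := FirstGen_trees (beta := inr sig :: beta) HF.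
  exists Gs, (flatten (map (@yield _ _) Gs)); rewrite Hb; split => //.
  by exists (flatten (map (@lrparse _ _) Gs)).
- move=> [[_ [_ He]] Hp] Hact.
  case: l He => [tau|] He.
  + case: He => beta [Hb HV]; subst V.
    move=> [|P1 Ps] //= [Hr Hrs] /andP [vP1 vPs].
    have [Fs [w [vFs rFs yFs Hl [u Hu]]]] := IH _ Hp Hact _ Hrs vPs.
    exists (P1 :: Fs), w; rewrite Hb /= vP1 vFs rFs Hr yFs catA; split => //.
    by exists u; rewrite Hu catA.
  + case: He => Y [beta [Hb [HY [Ha [HprodV HF]]]]].
    move=> Ps Hrs vPs.
    have [Fs [w [vFs rFs yFs Hl [u Hu]]]] := IH _ Hp Hact _ Hrs vPs.
    have [Gs [vGs rGs Hla]] := FirstGen_trees HF.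
    exists (Node Y (v_beta V) Fs :: Gs), (w ++ flatten (map (@yield _ _) Gs)).
    rewrite Hb /= vGs rGs HprodV rFs eqxx vFs yFs -!catA; split => //.
    * by rewrite Hl Hla map_cat -catA take_take_cat.
    * by exists (u ++ [:: Reduce Y (v_beta V)] ++ flatten (map (@lrparse _ _) Gs));
        rewrite Hu -!catA.
Qed.

End Proof.

Theorem mainTheorem13 (Lam Sig : finType) (G : grammar Lam Sig) (k : nat)
  (HG : start_condition G)
  (eta : seq (Lam + Sig)) (Heta : (start G, eta) \in prods G)
  (steps : seq (option (Lam + Sig) * vertex Lam Sig))
  (Hpath : nfa_path G k (start_vertex G k eta) steps)
  (lam : seq (option Sig)) (Hlam : size lam = k)
  (Hact : has_action G k (last (start_vertex G k eta) (map snd steps)) lam)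
  (xs : seq Sig) (Ps : seq (ptree Lam Sig))
  (Hroots : map (@proot Lam Sig) Ps = pmap id (map fst steps))
  (Hvalid : all (valid G) Ps)
  (Hyield : flatten (map (@yield Lam Sig) Ps) = xs) :
  exists xs' : seq Sig,
    take k (map Some xs' ++ nseq k None) = lam /\
    exists P : ptree Lam Sig,
      [/\ valid G P, proot P = inl (start G), yield P = xs ++ xs' &
          is_prefix (flatten (map (@lrparse Lam Sig) Ps)) (lrparse P)].
Proof.
have [Fs [w [vFs rFs yFs Hl [u Hu]]]] := gen Hlam Hpath Hact Hroots Hvalid.
exists w; split; first by rewrite Hl.
exists (Node (start G) eta Fs); split => //=.
- by rewrite Heta rFs eqxx vFs.
- by rewrite yFs Hyield.
- by exists (u ++ [:: Reduce (start G) eta]); rewrite Hu catA.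
Qed.
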